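(* Let $p$ be a propositional variable. A substitution $\sigma$ is a unifier of $[1]p$ in $\mathbf{GLP}$ (i.e. $\mathbf{GLP}\vdash[1]\sigma(p)$) if and only if $\sigma\leq Q^k$ for some $k\geq 1$, where $Q^k$ denotes the substitution $p\mapsto Q^k(p)$ (leaving other variables fixed).
   Context: $\mathbf{GLP}$ is the polymodal logic with modalities $[0],[1],[2],\dots$ ($\langle k\rangle\phi:=\neg[k]\neg\phi$) axiomatized by: classical tautologies; $[k](\phi\to\psi)\to([k]\phi\to[k]\psi)$; $[k]([k]\phi\to\phi)\to[k]\phi$; $\langle j\rangle\phi\to[k]\langle j\rangle\phi$ for $j<k$; $[j]\phi\to[k]\phi$ for $j\leq k$; rules modus ponens and necessitation for each $[k]$. A substitution commutes with all connectives and modalities. For substitutions, $\tau\leq\sigma$ means there is a substitution $\theta$ with $\mathbf{GLP}\vdash\tau(q)\leftrightarrow\theta(\sigma(q))$ for every variable $q$. Define $Q_1(p):=p$, $Q_{i+1}(p):=p\lor[0]Q_i(p)$, and $Q^n(p):=\bigwedge_{i=1}^n([0]Q_i(p)\to Q_i(p))$. *)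

(* Defs.v *)
From Stdlib Require Import Arith.

Inductive form : Type :=
| Var : nat -> form
| Bot : form
| Imp : form -> form -> form
| Box : nat -> form -> form.

Definition Neg (a : form) : form := Imp a Bot.
Definition Top : form := Neg Bot.
Definition Or (a b : form) : form := Imp (Neg a) b.
Definition And (a b : form) : form := Neg (Imp a (Neg b)).
Definition Iff (a b : form) : form := And (Imp a b) (Imp b a).
Definition Dia (k : nat) (a : form) : form := Neg (Box k (Neg a)).

(* Classical tautologies: formulas true under every Boolean valuation
   treating variables and boxed formulas as propositional atoms. *)
Fixpoint beval (v : form -> bool) (a : form) : bool :=
  match a with
  | Var n => v (Var n)
  | Bot => false
  | Imp b c => implb (beval v b) (beval v c)
  | Box k b => v (Box k b)
  end.

Definition tautology (a : form) : Prop := forall v, beval v a = true.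

Inductive GLP : form -> Prop :=
| ax_taut : forall a, tautology a -> GLP a
| ax_K : forall k a b, GLP (Imp (Box k (Imp a b)) (Imp (Box k a) (Box k b)))
| ax_Lob : forall k a, GLP (Imp (Box k (Imp (Box k a) a)) (Box k a))
| ax_dia : forall j k a, j < k -> GLP (Imp (Dia j a) (Box k (Dia j a)))
| ax_mono : forall j k a, j <= k -> GLP (Imp (Box j a) (Box k a))
| r_mp : forall a b, GLP (Imp a b) -> GLP a -> GLP b
| r_nec : forall k a, GLP a -> GLP (Box k a).

Definition subst := nat -> form.

Fixpoint apply_subst (s : subst) (a : form) : form :=
  match a with
  | Var n => s n
  | Bot => Bot
  | Imp b c => Imp (apply_subst s b) (apply_subst s c)
  | Box k b => Box k (apply_subst s b)
  end.

Definition subst_le (tau sigma : subst) : Prop :=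
  exists theta : subst, forall q, GLP (Iff (tau q) (apply_subst theta (sigma q))).

(* Qi p i = Q_{i+1}(p):  Q_1 = p,  Q_{i+1} = p \/ [0] Q_i. *)
Fixpoint Qi (p : form) (i : nat) : form :=
  match i with
  | 0 => p
  | S i' => Or p (Box 0 (Qi p i'))
  end.

(* Qn p n = Q^n(p) = /\_{i=1}^n ([0]Q_i(p) -> Q_i(p)); empty conjunction = Top. *)
Fixpoint Qn (p : form) (n : nat) : form :=
  match n with
  | 0 => Top
  | S n' => And (Qn p n') (Imp (Box 0 (Qi p n')) (Qi p n'))
  end.

Definition QSubst (p : nat) (n : nat) : subst :=
  fun q => if Nat.eqb q p then Qn (Var p) n else Var q.

(* Main.v *)
Require Import Defs.
From Stdlib Require Import Arith List Lia Classical ClassicalEpsilon Cantor.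
Import ListNotations.

Ltac bt := intros; unfold tautology, Iff, And, Or, Dia, Top, Neg in *; intros; simpl in *;
  repeat match goal with
  | v : form -> bool |- _ =>
    match goal with
    | |- context [beval v ?x] => destruct (beval v x)
    | |- context [v ?x] => destruct (v x)
    | H : context [beval v ?x] |- _ => destruct (beval v x)
    | H : context [v ?x] |- _ => destruct (v x)
    end
  end; simpl in *; auto; try discriminate.

Lemma taut_mp a b : (forall v, beval v a = true -> beval v b = true) -> GLP a -> GLP b.
Proof. intros H Ha. apply (r_mp a b); auto. apply ax_taut. intro v. simpl.
  specialize (H v). destruct (beval v a); simpl; auto. Qed.

Lemma taut_mp2 a b c : (forall v, beval v a = true -> beval v b = true -> beval v c = true) -> GLP a -> GLP b -> GLP c.
Proof. intros H Ha Hb. apply (r_mp b c); auto. apply (taut_mp a); auto. intro v. simpl.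
  specialize (H v). destruct (beval v a), (beval v b); simpl; auto. Qed.

Lemma taut_mp3 a b c d : (forall v, beval v a = true -> beval v b = true -> beval v c = true -> beval v d = true) -> GLP a -> GLP b -> GLP c -> GLP d.
Proof. intros H Ha Hb Hc. apply (r_mp c d); auto. apply (taut_mp2 a b); auto. intro v. simpl.
  specialize (H v). destruct (beval v a), (beval v b), (beval v c); simpl; auto. Qed.

Lemma taut_mp4 a b c d e : (forall v, beval v a = true -> beval v b = true -> beval v c = true -> beval v d = true -> beval v e = true) -> GLP a -> GLP b -> GLP c -> GLP d -> GLP e.
Proof. intros H Ha Hb Hc Hd. apply (r_mp d e); auto. apply (taut_mp3 a b c); auto. intro v. simpl.
  specialize (H v). destruct (beval v a), (beval v b), (beval v c), (beval v d); simpl; auto. Qed.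

Lemma box_mono k a b : GLP (Imp a b) -> GLP (Imp (Box k a) (Box k b)).
Proof. intro H. exact (r_mp _ _ (ax_K k a b) (r_nec k _ H)). Qed.

Lemma box_mono_t k a b : (forall v, beval v a = true -> beval v b = true) -> GLP (Imp (Box k a) (Box k b)).
Proof. intro H. apply box_mono. apply ax_taut. intro v. simpl. specialize (H v).
  destruct (beval v a); simpl; auto. Qed.

Lemma imp_trans a b c : GLP (Imp a b) -> GLP (Imp b c) -> GLP (Imp a c).
Proof. apply taut_mp2. bt. Qed.

Lemma box2 k a b c : GLP (Imp a (Imp b c)) -> GLP (Imp (Box k a) (Imp (Box k b) (Box k c))).
Proof. intro H. apply box_mono with (k:=k) in H.
  refine (taut_mp2 _ _ _ _ H (ax_K k b c)); bt. Qed.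

Lemma box_and k a b : GLP (Imp (Box k a) (Imp (Box k b) (Box k (And a b)))).
Proof. apply box2. apply ax_taut. bt. Qed.

Lemma four k a : GLP (Imp (Box k a) (Box k (Box k a))).
Proof.
  set (X := And a (Box k a)).
  assert (H1 : GLP (Imp (Box k X) (Box k a))) by (apply box_mono_t; subst X; bt).
  assert (H2 : GLP (Imp a (Imp (Box k X) X))).
  { refine (taut_mp _ _ _ H1); subst X; bt. }
  apply box_mono with (k:=k) in H2.
  eapply imp_trans. exact H2. eapply imp_trans. apply ax_Lob.
  apply box_mono_t. subst X; bt.
Qed.

Lemma box1_refl a : GLP (Box 1 (Imp (Box 0 a) a)).
Proof.
  assert (H1 : GLP (Imp (Box 0 a) (Box 1 (Imp (Box 0 a) a)))).
  { eapply imp_trans. apply ax_mono with (j:=0) (k:=1); lia. apply box_mono_t. bt. }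
  assert (H2 : GLP (Imp (Box 0 a) (Box 0 (Neg (Neg a))))) by (apply box_mono_t; bt).
  assert (H2' : GLP (Imp (Box 0 (Neg (Neg a))) (Box 0 a))) by (apply box_mono_t; bt).
  assert (H3 : GLP (Imp (Dia 0 (Neg a)) (Imp (Box 0 a) a))) by (refine (taut_mp _ _ _ H2); bt).
  apply box_mono with (k:=1) in H3.
  pose proof (ax_dia 0 1 (Neg a) ltac:(lia)) as H4.
  refine (taut_mp4 _ _ _ _ _ _ H1 H2' H3 H4); bt.
Qed.

Fixpoint conjL (l : list form) : form :=
  match l with [] => Top | x :: l' => And x (conjL l') end.

Lemma beval_conjL v l : beval v (conjL l) = true <-> (forall x, In x l -> beval v x = true).
Proof.
  induction l as [|x l IH]; simpl.
  - split; auto; intros _ y [].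
  - unfold And, Neg. simpl. split.
    + intros H y [<-|Hy]; destruct (beval v x) eqn:E1, (beval v (conjL l)) eqn:E2;
        simpl in *; try discriminate; auto. apply IH; auto.
    + intros H. rewrite (H x (or_introl eq_refl)).
      assert (beval v (conjL l) = true) as -> by (apply IH; auto). reflexivity.
Qed.

Definition Good (x : form) : Prop := GLP (Imp x (Box 1 x)).

Lemma good_and x y : Good x -> Good y -> Good (And x y).
Proof. unfold Good; intros Hx Hy.
  refine (taut_mp3 _ _ _ _ _ Hx Hy (box_and 1 x y)); bt. Qed.

Lemma good_top : Good Top.
Proof. unfold Good. refine (taut_mp _ _ _ (r_nec 1 Top (ax_taut Top ltac:(bt)))); bt. Qed.

Lemma good_conj l : (forall x, In x l -> Good x) -> Good (conjL l).
Proof. induction l as [|x l IH]; simpl; intros H. apply good_top.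
  apply good_and; auto. Qed.

Lemma good_box0 a : Good (Box 0 a).
Proof. unfold Good. eapply imp_trans. apply four. apply ax_mono; lia. Qed.

Lemma good_dia0 a : Good (Dia 0 a).
Proof. unfold Good. apply ax_dia; lia. Qed.

Lemma good_refl a : Good (Imp (Box 0 a) a).
Proof. unfold Good. refine (taut_mp _ _ _ (box1_refl a)); bt. Qed.

(* consistency and Lindenbaum *)
Definition Cons (G : form -> Prop) : Prop :=
  ~ exists l, (forall x, In x l -> G x) /\ GLP (Imp (conjL l) Bot).

Fixpoint enc (f : form) : nat :=
  match f with
  | Var n => to_nat (0, n)
  | Bot => to_nat (1, 0)
  | Imp a b => to_nat (2, to_nat (enc a, enc b))
  | Box k a => to_nat (3, to_nat (k, enc a))
  end.

Arguments to_nat : simpl never.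
Lemma to_nat_inj p q : to_nat p = to_nat q -> p = q.
Proof. intro H. rewrite <- (cancel_of_to p), <- (cancel_of_to q), H. reflexivity. Qed.

Lemma enc_inj : forall f g, enc f = enc g -> f = g.
Proof.
  induction f; destruct g; simpl; intro H; apply to_nat_inj in H;
    try discriminate; try reflexivity; injection H; clear H; intros; subst; auto.
  - apply to_nat_inj in H. injection H; intros. f_equal; auto.
  - apply to_nat_inj in H. injection H; intros. f_equal; auto.
Qed.

Fixpoint chain (G : form -> Prop) (n : nat) : form -> Prop :=
  match n with
  | 0 => G
  | S m => fun x => chain G m x \/ (enc x = m /\ Cons (fun y => chain G m y \/ y = x))
  end.

Definition MC (G : form -> Prop) (x : form) : Prop := exists n, chain G n x.

Lemma chain_mono G m d x : chain G m x -> chain G (d + m) x.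
Proof. induction d; simpl; auto. Qed.

Lemma cons_sub (G H : form -> Prop) : (forall x, G x -> H x) -> Cons H -> Cons G.
Proof. intros S C [l [Hl Hd]]. apply C. exists l. split; auto. Qed.

Lemma chain_cons G n : Cons G -> Cons (chain G n).
Proof.
  intro C. induction n as [|m IH]; simpl; auto.
  intros [l [Hl Hd]].
  destruct (classic (exists x, In x l /\ enc x = m /\ Cons (fun y => chain G m y \/ y = x)))
    as [[x [Hx [He Cx]]]|N].
  - apply Cx. exists l. split; auto. intros y Hy.
    destruct (Hl y Hy) as [A|[Ey _]]; auto. right. apply enc_inj. congruence.
  - apply IH. exists l. split; auto. intros y Hy.
    destruct (Hl y Hy) as [A|[Ey Cy]]; auto. exfalso; apply N; eauto.
Qed.

Lemma list_bound G l : (forall x, In x l -> MC G x) -> exists N, forall x, In x l -> chain G N x.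
Proof.
  induction l as [|y l IH]; intros H.
  - exists 0. intros x [].
  - destruct IH as [N HN]. intros; apply H; simpl; auto.
    destruct (H y (or_introl eq_refl)) as [M HM].
    exists (N + M). intros x [<-|Hx].
    + replace (N + M) with (N + M) by lia. apply chain_mono; auto.
    + replace (N + M) with (M + N) by lia. apply chain_mono; auto.
Qed.

Lemma MC_cons G : Cons G -> Cons (MC G).
Proof.
  intros C [l [Hl Hd]]. destruct (list_bound G l Hl) as [N HN].
  apply (chain_cons G N C). eauto.
Qed.

Lemma MC_max G f : MC G f \/ ~ Cons (fun y => MC G y \/ y = f).
Proof.
  destruct (classic (Cons (fun y => chain G (enc f) y \/ y = f))) as [C|C].
  - left. exists (S (enc f)). simpl. right. auto.
  - right. intro C'. apply C. revert C'. apply cons_sub.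
    intros x [A|A]; [left; exists (enc f)|right]; auto.
Qed.

Lemma MC_base G x : G x -> MC G x.
Proof. intro; exists 0; auto. Qed.

Lemma split_list (w : form -> Prop) f l :
  (forall x, In x l -> w x \/ x = f) ->
  exists l1, (forall x, In x l1 -> w x) /\
   forall v, (forall x, In x l1 -> beval v x = true) -> beval v f = true ->
        forall x, In x l -> beval v x = true.
Proof.
  induction l as [|y l IH]; intros H.
  - exists []. split. intros x []. intros v _ _ x [].
  - destruct IH as [l1 [H1 H2]]. intros; apply H; simpl; auto.
    destruct (H y (or_introl eq_refl)) as [Hy|Hy].
    + exists (y :: l1). split.
      * intros x [<-|Hx]; auto.
      * intros v Hv Hf x [<-|Hx]. apply Hv; simpl; auto.
        apply (H2 v); auto. intros; apply Hv; simpl; auto.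
    + exists l1. split; auto. intros v Hv Hf x [<-|Hx]. subst; auto. apply (H2 v); auto.
Qed.

Lemma conj_app_imp l1 l2 f :
  GLP (Imp (conjL l1) f) -> GLP (Imp (conjL l2) (Neg f)) -> GLP (Imp (conjL (l1 ++ l2)) Bot).
Proof.
  apply taut_mp2. intros v H1 H2. simpl in *.
  destruct (beval v (conjL (l1 ++ l2))) eqn:E; simpl; auto.
  pose proof (proj1 (beval_conjL v _) E) as E0; clear E; rename E0 into E.
  assert (A1 : beval v (conjL l1) = true) by (apply beval_conjL; intros; apply E, in_or_app; auto).
  assert (A2 : beval v (conjL l2) = true) by (apply beval_conjL; intros; apply E, in_or_app; auto).
  rewrite A1 in H1; rewrite A2 in H2. simpl in *. rewrite H1 in H2. discriminate.
Qed.

Definition MCSp (w : form -> Prop) : Prop :=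
  Cons w /\ forall f, w f \/ ~ Cons (fun y => w y \/ y = f).

Lemma mcs_neg_of w f : MCSp w -> ~ Cons (fun y => w y \/ y = f) ->
  exists l1, (forall x, In x l1 -> w x) /\ GLP (Imp (conjL l1) (Neg f)).
Proof.
  intros [Cw Mw] N. apply NNPP. intro Hn. apply N. intros [l [Hl Hd]].
  destruct (split_list w f l Hl) as [l1 [H1 H2]]. apply Hn. exists l1. split; auto.
  refine (taut_mp _ _ _ Hd). intros v Hv. simpl in *.
  destruct (beval v (conjL l1)) eqn:E; simpl; auto.
  destruct (beval v f) eqn:Ef; simpl; auto.
  assert (beval v (conjL l) = true) as E2.
  { apply beval_conjL. apply (H2 v); auto. apply beval_conjL; auto. }
  rewrite E2 in Hv. discriminate.
Qed.

Lemma mcs_clos w l f : MCSp w -> (forall x, In x l -> w x) -> GLP (Imp (conjL l) f) -> w f.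
Proof.
  intros M Hl Hf. destruct (proj2 M f) as [A|A]; auto.
  destruct (mcs_neg_of w f M A) as [l1 [H1 H2]].
  exfalso. apply (proj1 M). exists (l ++ l1). split.
  intros x Hx; apply in_app_or in Hx; destruct Hx; auto.
  apply (conj_app_imp _ _ f); auto.
Qed.

Lemma mcs_thm w f : MCSp w -> GLP f -> w f.
Proof. intros M H. apply (mcs_clos w [] f M). intros x []. refine (taut_mp _ _ _ H); bt. Qed.

Lemma mcs_mp w a b : MCSp w -> w a -> GLP (Imp a b) -> w b.
Proof. intros M Ha H. apply (mcs_clos w [a] b M). intros x [<-|[]]; auto.
  refine (taut_mp _ _ _ H); bt. Qed.

Lemma mcs_mp2 w a b c : MCSp w -> w a -> w b -> GLP (Imp a (Imp b c)) -> w c.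
Proof. intros M Ha Hb H. apply (mcs_clos w [a; b] c M). intros x [<-|[<-|[]]]; auto.
  refine (taut_mp _ _ _ H); bt. Qed.

Lemma mcs_neg w f : MCSp w -> ~ w f -> w (Neg f).
Proof. intros M N. destruct (proj2 M f) as [A|A]. contradiction.
  destruct (mcs_neg_of w f M A) as [l1 [H1 H2]]. apply (mcs_clos w l1); auto. Qed.

Lemma mcs_nocontra w f : MCSp w -> w f -> w (Neg f) -> False.
Proof. intros M H1 H2. apply (proj1 M). exists [f; Neg f]. split.
  intros x [<-|[<-|[]]]; auto. apply ax_taut; bt. Qed.

Definition InL (w : form -> Prop) (d : form) : Prop :=
  exists l, (forall x, In x l -> w x /\ Good x) /\ GLP (Imp (conjL l) d).

Fixpoint T (w : form -> Prop) (f : form) : Prop :=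
  match f with
  | Var n => w (Var n)
  | Bot => False
  | Imp a b => T w a -> T w b
  | Box k a => match k with 0 => w (Box 0 a) | 1 => InL w a | _ => True end
  end.

Lemma InL_mp w a b : InL w (Imp a b) -> InL w a -> InL w b.
Proof.
  intros [l1 [H1 D1]] [l2 [H2 D2]]. exists (l1 ++ l2). split.
  intros x Hx; apply in_app_or in Hx; destruct Hx; auto.
  refine (taut_mp2 _ _ _ _ D1 D2). intros v E1 E2. simpl in *.
  destruct (beval v (conjL (l1 ++ l2))) eqn:E; simpl; auto.
  pose proof (proj1 (beval_conjL v _) E) as E0; clear E; rename E0 into E.
  assert (A1 : beval v (conjL l1) = true) by (apply beval_conjL; intros; apply E, in_or_app; auto).
  assert (A2 : beval v (conjL l2) = true) by (apply beval_conjL; intros; apply E, in_or_app; auto).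
  rewrite A1 in E1; rewrite A2 in E2. simpl in *. rewrite E2 in E1. exact E1.
Qed.

Lemma InL_thm w a : GLP a -> InL w a.
Proof. intro H. exists []. split. intros x []. refine (taut_mp _ _ _ H); bt. Qed.

Lemma InL_single w x : w x -> Good x -> InL w x.
Proof. intros H G. exists [x]. split. intros y [<-|[]]; auto. apply ax_taut; bt. Qed.

Lemma InL_lob w a : InL w (Imp (Box 1 a) a) -> InL w a.
Proof.
  intros [l [Hl D]]. exists l. split; auto.
  assert (G : Good (conjL l)) by (apply good_conj; intros; apply Hl; auto).
  unfold Good in G.
  pose proof (box_mono 1 _ _ D) as D1.
  pose proof (ax_Lob 1 a) as D2.
  refine (taut_mp4 _ _ _ _ _ _ G D1 D2 D); bt.
Qed.

Definition valT w (f : form) : bool :=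
  if excluded_middle_informative (T w f) then true else false.

Lemma valT_spec w a : beval (valT w) a = true <-> T w a.
Proof.
  induction a; simpl.
  - unfold valT; destruct (excluded_middle_informative _); split; intros; auto; discriminate || contradiction.
  - split; intros; [discriminate|contradiction].
  - rewrite <- IHa1, <- IHa2.
    destruct (beval (valT w) a1), (beval (valT w) a2); simpl; split; intros; auto; try discriminate.
    all: exfalso; specialize (H eq_refl); discriminate.
  - unfold valT; destruct (excluded_middle_informative _); split; intros; auto; discriminate || contradiction.
Qed.

Lemma soundT w : MCSp w -> (forall a, w (Imp (Box 0 a) a)) -> forall C, GLP C -> T w C.
Proof.
  intros M R C HC. induction HC.
  - apply valT_spec. apply H.
  - destruct k as [|[|k]]; simpl; auto.
    + intros H1 H2. exact (mcs_mp2 w _ _ _ M H1 H2 (ax_K 0 a b)).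
    + apply InL_mp.
  - destruct k as [|[|k]]; simpl; auto.
    + intros H1. exact (mcs_mp w _ _ M H1 (ax_Lob 0 a)).
    + apply InL_lob.
  - destruct k as [|[|k]]; [lia| |simpl; auto].
    destruct j as [|j]; [|lia]. simpl. intros N.
    apply InL_single; [|apply good_dia0]. exact (mcs_neg w (Box 0 (Neg a)) M N).
  - destruct j as [|[|j]], k as [|[|k]]; simpl; auto; try lia.
    intros H0. apply (InL_mp w (Box 0 a)).
    + apply InL_single; auto. apply good_refl.
    + apply InL_single; auto. apply good_box0.
  - simpl in IHHC1. auto.
  - destruct k as [|[|k]]; simpl; auto.
    + apply mcs_thm; auto. apply r_nec; auto.
    + apply InL_thm; auto.
Qed.

Definition reflf (Y : form) : form := Imp (Box 0 Y) Y.

Lemma extract_Ys A l : (forall x, In x l -> x = Neg A \/ exists Y, x = reflf Y) ->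
  exists Ys, forall x, In x l -> x = Neg A \/ In x (map reflf Ys).
Proof.
  induction l as [|y l IH]; intros H.
  - exists []. intros x [].
  - destruct IH as [Ys HY]. intros; apply H; simpl; auto.
    destruct (H y (or_introl eq_refl)) as [E|[Y E]].
    + exists Ys. intros x [<-|Hx]; auto.
    + exists (Y :: Ys). intros x [<-|Hx]. right; simpl; auto.
      destruct (HY x Hx); auto. right; simpl; auto.
Qed.

Lemma hard1 A : GLP (Box 1 A) -> exists Ys, GLP (Imp (conjL (map reflf Ys)) A).
Proof.
  intro HA. apply NNPP. intro N.
  set (G0 := fun f => f = Neg A \/ exists Y, f = reflf Y).
  assert (C0 : Cons G0).
  { intros [l [Hl Hd]]. destruct (extract_Ys A l Hl) as [Ys HY]. apply N. exists Ys.
    refine (taut_mp _ _ _ Hd). intros v Hv. simpl in *.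
    destruct (beval v (conjL (map reflf Ys))) eqn:E; simpl; auto.
    destruct (beval v A) eqn:EA; simpl; auto.
    assert (beval v (conjL l) = true) as E2.
    { apply beval_conjL. intros x Hx. destruct (HY x Hx) as [->|Hm].
      simpl. rewrite EA. reflexivity. exact (proj1 (beval_conjL v _) E x Hm). }
    rewrite E2 in Hv. discriminate. }
  set (w := MC G0).
  assert (M : MCSp w) by (split; [apply MC_cons; auto| apply MC_max]).
  assert (R : forall a, w (Imp (Box 0 a) a)) by (intros a; apply MC_base; unfold G0; right; exists a; reflexivity).
  assert (NA : w (Neg A)) by (apply MC_base; unfold G0; left; reflexivity).
  pose proof (soundT w M R _ HA) as T1. simpl in T1.
  destruct T1 as [l [Hl D]].
  apply (mcs_nocontra w A M); auto.
  apply (mcs_clos w l A M); auto. intros; apply Hl; auto.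
Qed.

Lemma F1 Y : GLP (Imp (Box 0 Y) (Box 0 (And Y (Box 0 Y)))).
Proof. refine (taut_mp2 _ _ _ _ (four 0 Y) (box_and 0 Y (Box 0 Y))); bt. Qed.

Lemma L1 Y B n : GLP (Imp (And Y (Box 0 Y)) (Imp (Qi (Imp (reflf Y) B) n) (Qi B n))).
Proof.
  induction n as [|n IH]; simpl.
  - apply ax_taut. unfold reflf. bt.
  - pose proof (box_mono 0 _ _ IH) as G2.
    refine (taut_mp3 _ _ _ _ _ (F1 Y) G2 (ax_K 0 (Qi (Imp (reflf Y) B) n) (Qi B n))). unfold reflf. bt.
Qed.

Lemma Key Y B n : GLP (Imp (Qi (Imp (reflf Y) B) n) (Imp (Box 0 (Qi (Imp (reflf Y) B) n)) (Qi B (S n)))).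
Proof.
  induction n as [|n IH].
  - pose proof (box_mono 0 _ _ (L1 Y B 0)) as G. simpl in G |- *.
    refine (taut_mp3 _ _ _ _ _ (F1 Y) G (ax_K 0 (Imp (reflf Y) B) B)). unfold reflf. bt.
  - set (B' := Imp (reflf Y) B).
    assert (G2 : GLP (Imp (Box 0 (And Y (Box 0 Y))) (Box 0 (Imp (Qi B' (S n)) (Qi B (S n)))))).
    { apply box_mono. apply L1. }
    assert (G2' : GLP (Imp (Box 0 (And Y (Box 0 Y))) (Imp (Box 0 (Qi B' (S n))) (Box 0 (Qi B (S n)))))).
    { refine (taut_mp2 _ _ _ _ G2 (ax_K 0 (Qi B' (S n)) (Qi B (S n)))); bt. }
    assert (G4 : GLP (Imp (Box 0 (Qi B' n)) (Imp (Box 0 (Box 0 (Qi B' n))) (Box 0 (Qi B (S n)))))).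
    { apply box2. exact IH. }
    pose proof (four 0 (Qi B' n)) as G3.
    pose proof (F1 Y) as G1.
    change (GLP (Imp (Or B' (Box 0 (Qi B' n))) (Imp (Box 0 (Qi B' (S n))) (Or B (Box 0 (Qi B (S n))))))).
    refine (taut_mp4 _ _ _ _ _ _ G1 G2' G3 G4). unfold B', reflf. bt.
Qed.

Lemma Conv : forall Ys B, GLP (Imp (conjL (map reflf Ys)) B) -> exists j, GLP (Qi B j).
Proof.
  induction Ys as [|Y Ys IH]; intros B H; simpl in H.
  - exists 0. simpl. refine (taut_mp _ _ _ H); bt.
  - assert (H' : GLP (Imp (conjL (map reflf Ys)) (Imp (reflf Y) B))).
    { refine (taut_mp _ _ _ H); bt. }
    destruct (IH _ H') as [j Hj]. exists (S j).
    exact (r_mp _ _ (r_mp _ _ (Key Y B j) Hj) (r_nec 0 _ Hj)).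
Qed.

Lemma QiQn A : forall j, GLP (Imp (Qn A j) (Imp (Qi A j) A)).
Proof.
  induction j as [|j IH].
  - apply ax_taut. simpl. bt.
  - change (GLP (Imp (And (Qn A j) (Imp (Box 0 (Qi A j)) (Qi A j))) (Imp (Or A (Box 0 (Qi A j))) A))).
    refine (taut_mp _ _ _ IH); bt.
Qed.

Lemma A_Qi A : forall i, GLP (Imp A (Qi A i)).
Proof. induction i as [|i IH]. apply ax_taut; simpl; bt.
  change (GLP (Imp A (Or A (Box 0 (Qi A i))))). apply ax_taut; bt. Qed.

Lemma A_Qn A : forall k, GLP (Imp A (Qn A k)).
Proof. induction k as [|k IH]. apply ax_taut; simpl; bt.
  change (GLP (Imp A (And (Qn A k) (Imp (Box 0 (Qi A k)) (Qi A k))))).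
  refine (taut_mp2 _ _ _ _ IH (A_Qi A k)); bt. Qed.

Lemma box1_Qn B : forall k, GLP (Box 1 (Qn B k)).
Proof. induction k as [|k IH].
  - apply r_nec. apply ax_taut; simpl; bt.
  - change (GLP (Box 1 (And (Qn B k) (Imp (Box 0 (Qi B k)) (Qi B k))))).
    exact (r_mp _ _ (r_mp _ _ (box_and 1 _ _) IH) (box1_refl _)).
Qed.

Lemma subst_Qi s p : forall i, apply_subst s (Qi (Var p) i) = Qi (s p) i.
Proof. induction i; simpl; auto. unfold Or, Neg. simpl. rewrite IHi. reflexivity. Qed.

Lemma subst_Qn s p : forall k, apply_subst s (Qn (Var p) k) = Qn (s p) k.
Proof. induction k; simpl; auto. unfold And, Neg. simpl. rewrite IHk, subst_Qi. reflexivity. Qed.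

Theorem mainTheorem2 (p : nat) (sigma : subst) :
  GLP (Box 1 (sigma p)) <-> exists k : nat, 1 <= k /\ subst_le sigma (QSubst p k).
Proof.
  split.
  - intro H. destruct (hard1 _ H) as [Ys HY]. destruct (Conv _ _ HY) as [j Hj].
    exists (S j). split; [lia|]. exists sigma. intro q. unfold QSubst.
    destruct (Nat.eqb q p) eqn:E.
    + apply Nat.eqb_eq in E. subst q. rewrite subst_Qn.
      assert (H1 : GLP (Imp (Qn (sigma p) (S j)) (sigma p))).
      { pose proof (QiQn (sigma p) j) as Q.
        change (GLP (Imp (And (Qn (sigma p) j) (Imp (Box 0 (Qi (sigma p) j)) (Qi (sigma p) j))) (sigma p))).
        refine (taut_mp2 _ _ _ _ Q Hj); bt. }
      refine (taut_mp2 _ _ _ _ (A_Qn (sigma p) (S j)) H1); bt.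
    + simpl. apply ax_taut; bt.
  - intros [k [Hk [theta Ht]]]. specialize (Ht p). unfold QSubst in Ht.
    rewrite Nat.eqb_refl, subst_Qn in Ht.
    assert (H1 : GLP (Imp (Qn (theta p) k) (sigma p))) by (refine (taut_mp _ _ _ Ht); bt).
    exact (r_mp _ _ (box_mono 1 _ _ H1) (box1_Qn _ k)).
Qed.
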